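(* Let $P$ be a priority forest on $[n]_0$ with $m$ edges, and let $C$ be a maximal chain of $[\hat0,P]$ with Jordan–Hölder permutation $\lambda$. Then $s_P\circ\lambda$ is an $(m,n)$-parking function with priority forest $P$ and bird's eye permutation $\lambda^{-1}$.
   Context: $[n]=\{1,\dots,n\}$, $[n]_0=\{0,\dots,n\}$. A priority forest on $[n]_0$ is a rooted forest with vertex set $[n]_0$ whose component trees $T_0,T_1,\dots$ are increasing (each non-root vertex has a larger label than its parent) and satisfy: for $j<k$ every label of $T_j$ is smaller than every label of $T_k$. Its shifted parent map $s_P:[n]\to[n]$ is the partial function with $s_P(i)=p(i)+1$ for non-root $i$ with parent $p(i)$. $\Pi(n)$ is the poset of priority forests on $[n]_0$ ordered by inclusion of edge sets, with an extra top element; $\hat0$ is the edgeless forest. For priority forests $Q\lessdot Q'$ (one edge added), $\lambda(Q,Q')$ is the larger endpoint of the edge in $E(Q')\setminus E(Q)$. A maximal chain $\hat0=P_0\lessdot\cdots\lessdot P_m=P$ has Jordan–Hölder permutation $\lambda:[m]\to[n]$, $i\mapsto\lambda(P_{i-1},P_i)$, which is injective; $\lambda^{-1}$ is its partial inverse $[n]\to[m]$. An $(m,n)$-parking function is a map $\pi:[m]\to[n]$ such that when cars $1,\dots,m$ arrive in order to spots $1,\dots,n$ and car $i$ parks at the first empty spot $\ge\pi(i)$, all cars park. Its bird's eye permutation $\omega_\pi:[n]\to[m]$ sends each occupied spot to the car parked there. Its priority forest is the priority forest whose shifted parent map is $\pi\circ\omega_\pi$. *)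

(* Defs.v *)
From mathcomp Require Import all_boot.
Set Implicit Arguments. Unset Strict Implicit. Unset Printing Implicit Defensive.

(* Vertices of [n]_0 = {0,...,n} are ordinals 'I_n.+1.  A (rooted, increasing)
   forest is stored as a set of directed edges (parent, child). *)
Definition edge (n : nat) := ('I_n.+1 * 'I_n.+1)%type.
Definition pforest (n : nat) := {set edge n}.

Definition adj n (E : pforest n) : rel 'I_n.+1 :=
  fun x y => ((x, y) \in E) || ((y, x) \in E).
Definition same_comp n (E : pforest n) (x y : 'I_n.+1) : bool :=
  connect (adj E) x y.

(* Priority forest: every edge goes from a parent to a larger child
   (increasing trees; acyclicity follows), each vertex has at most one
   parent, and distinct components are ordered: all labels of one are
   smaller than all labels of the other. *)
Definition is_priority_forest n (E : pforest n) : Prop :=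
  (forall e, e \in E -> e.1 < e.2) /\
  (forall p p' c, (p, c) \in E -> (p', c) \in E -> p = p') /\
  (forall x y, ~~ same_comp E x y -> x < y ->
     forall x' y', same_comp E x x' -> same_comp E y y' -> x' < y').

Definition spm n (E : pforest n) (i : nat) : option nat :=
  if [pick e in E | val e.2 == i] is Some e then Some (val e.1).+1 else None.

Definition max_chain n (P : pforest n) (m : nat) (C : nat -> pforest n) : Prop :=
  C 0 = set0 /\ C m = P /\ (forall i, i <= m -> is_priority_forest (C i)) /\
  (forall i, 0 < i <= m -> exists e, e \notin C i.-1 /\ C i = e |: C i.-1).

Definition JH_perm n (C : nat -> pforest n) (m : nat) (lam : nat -> nat) : Prop :=
  forall i, 0 < i <= m ->
    exists e, e \notin C i.-1 /\ C i = e |: C i.-1 /\ lam i = maxn e.1 e.2.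

(* parking process: list of spots of cars 1..k (position j-1 = spot of car j),
   or None if some car fails to park among spots 1..n *)
Fixpoint park_seq (pi : nat -> nat) (n k : nat) : option (seq nat) :=
  match k with
  | 0 => Some [::]
  | k'.+1 =>
    match park_seq pi n k' with
    | None => None
    | Some occ =>
      match [seq s <- index_iota (pi k'.+1) n.+1 | s \notin occ] with
      | [::] => None
      | s :: _ => Some (rcons occ s)
      end
    end
  end.

Definition parking_function (m n : nat) (pi : nat -> nat) : Prop :=
  (forall i, 0 < i <= m -> 0 < pi i <= n) /\ park_seq pi n m <> None.

Definition birdseye (pi : nat -> nat) (m n s : nat) : option nat :=
  match park_seq pi n m with
  | Some occ => if (0 < s <= n) && (s \in occ) then Some (index s occ).+1 else None
  | None => None
  end.

(* the forest whose shifted parent map is pi o omega_pi: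
   edge (p, i) iff omega_pi(i) = c and pi(c) = p + 1 *)
Definition pf_of_parking (n m : nat) (pi : nat -> nat) : pforest n :=
  [set e : edge n | if birdseye pi m n e.2 is Some c then pi c == (val e.1).+1 else false].

(* Main.v *)
Require Import Defs.
From mathcomp Require Import all_boot.
From mathcomp Require Import zify.
Set Implicit Arguments. Unset Strict Implicit. Unset Printing Implicit Defensive.

Definition dadj n (E : pforest n) : rel 'I_n.+1 := fun a b => (a, b) \in E.

Lemma dlast (T : finType) (e : rel T) x y :
  connect e x y -> x = y \/ exists2 z, connect e x z & e z y.
Proof.
move/connectP=> [t]; case/lastP: t => [|t z] /=; first by move=> _ ->; left.
rewrite rcons_path last_rcons => /andP[pt ez] ->; right.
exists (last x t) => //; apply/connectP; by exists t.
Qed.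

Lemma path_incr n (E : pforest n) : (forall e, e \in E -> e.1 < e.2) ->
  forall (t : seq 'I_n.+1) (x : 'I_n.+1), path (dadj E) x t -> x <= last x t.
Proof.
move=> Hinc; elim=> [|y t IH] x //= /andP[h1 h2].
have := IH _ h2; have := Hinc _ h1 => /= a b; apply: leq_trans b; exact: ltnW.
Qed.

Lemma noparent n (E : pforest n) : is_priority_forest E ->
  forall v, (forall u, (u, v) \notin E) -> forall w, connect (adj E) v w -> v <= w.
Proof.
move=> [Hinc [Hpar _]] v Hv w H.
suff: connect (dadj E) v w.
  move/connectP=> [t pt ->]; exact: (path_incr Hinc pt).
move: H; move/connectP=> [t]; elim/last_ind: t w => [|t u IH] w /=; first by move=> _ ->.
rewrite rcons_path last_rcons => /andP[pt a] ->.
have := IH _ pt erefl. set x := last v t in a *.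
move=> dx. case/orP: a => a.
  by apply: connect_trans dx (connect1 _).
case: (dlast dx) => [xv|[z dz ezx]].
  by rewrite -xv in a; have := Hv u; rewrite a.
by rewrite (Hpar _ _ _ a ezx).
Qed.

Lemma has_parent n (E : pforest n) : is_priority_forest E ->
  forall p c v : 'I_n.+1, (p, c) \in E -> p < v -> v < c -> exists u, (u, v) \in E.
Proof.
move=> HE p c v pc pv vc.
case: (boolP [exists u, (u, v) \in E]) => [/existsP[u h]|/existsPn h]; first by exists u.
exfalso.
have Hv : forall u, (u, v) \notin E by exact h.
case: (boolP (same_comp E p v)) => s.
  have : connect (adj E) v p.
    rewrite sym_connect_sym; first exact s.
    by move=> a b; rewrite /adj orbC.
  by move/(noparent HE Hv); rewrite leqNgt pv.
have := (proj2 (proj2 HE)) p v s pv c v.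
have -> : same_comp E p c by apply: connect1; rewrite /adj pc.
rewrite /same_comp connect0 => /(_ erefl erefl). by rewrite ltnNge (ltnW vc).
Qed.

Lemma spm_edge n (P : pforest n) : is_priority_forest P ->
  forall a b, (a, b) \in P -> spm P b = Some (val a).+1.
Proof.
move=> [_ [Hpar _]] a b ab; rewrite /spm; case: pickP => [[x y] /andP[eP /eqP eb] | H].
  have eb' : y = b by apply: val_inj.
  by rewrite /= (Hpar x a b) // -eb'.
by have := H (a, b); rewrite /= ab eqxx.
Qed.

Lemma andI (a b : bool) : a -> b -> a && b.
Proof. by move=> -> ->. Qed.

Lemma chain_sub n (P : pforest n) m C : max_chain P m C ->
  forall k, k <= m -> forall j, j <= k -> C j \subset C k.
Proof.
move=> [_ [_ [_ Hs]]]; elim=> [|k IH] km j jk.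
  by move: jk; rewrite leqn0 => /eqP ->.
case: (ltngtP j k.+1) => [jk'|//|-> //]; last by rewrite ltnNge jk.
apply: subset_trans (IH (ltnW km) _ jk') _.
have [e [_ ->]] := Hs k.+1 (andI (ltn0Sn k) km).
exact: subsetUr.
Qed.

Lemma chain_step n (P : pforest n) m C lam : max_chain P m C -> JH_perm C m lam ->
  forall i, 0 < i <= m -> exists e : edge n, [/\ e \notin C i.-1, C i = e |: C i.-1,
     lam i = e.2, e \in P & e.1 < e.2].
Proof.
move=> HC HJ i /andP[i0 im].
have [e [eC [Ci li]]] := HJ i (andI i0 im).
have eCi : e \in C i by rewrite Ci setU11.
have [_ [CmP [Hpf _]]] := HC.
have lt : e.1 < e.2 by case: (Hpf i im) => H _; exact: H.
exists e; split => //.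
  by rewrite li; apply/maxn_idPr; exact: ltnW.
rewrite -CmP; exact: (subsetP (chain_sub HC (leqnn m) im) e eCi).
Qed.

Lemma L_mem n (P : pforest n) m C lam : max_chain P m C -> JH_perm C m lam ->
  forall k, k <= m -> forall x, x \in C k -> exists2 j, 0 < j <= k & lam j = x.2.
Proof.
move=> HC HJ; elim=> [|k IH] km x.
  by have [-> _] := HC; rewrite inE.
have [e [_ Ce le _ _]] := chain_step HC HJ (andI (ltn0Sn k) km).
rewrite Ce /= in_setU1 => /orP[/eqP ->|xC].
  by exists k.+1; rewrite ?ltn0Sn ?leqnn.
have [j /andP[j0 jk] lj] := IH (ltnW km) x xC.
by exists j => //; rewrite j0 (leq_trans jk).
Qed.

Lemma lam_inj n (P : pforest n) m C lam : is_priority_forest P ->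
  max_chain P m C -> JH_perm C m lam ->
  forall i j, 0 < i <= m -> 0 < j <= m -> lam i = lam j -> i = j.
Proof.
move=> [_ [Hpar _]] HC HJ.
suff H : forall i j, 0 < i <= m -> 0 < j <= m -> lam i = lam j -> i < j -> False.
  move=> i j Hi Hj lij; case: (ltngtP i j) => // h.
    by case: (H i j Hi Hj lij h).
  by case: (H j i Hj Hi (esym lij) h).
move=> i j Hi Hj lij ij.
have [ei [_ Cei lei eiP _]] := chain_step HC HJ Hi.
have [ej [ejC _ lej ejP _]] := chain_step HC HJ Hj.
have e2 : ei.2 = ej.2 by apply: val_inj; rewrite /= -lei -lej.
have e1 : ei.1 = ej.1.
  apply: (Hpar _ _ ei.2); first by rewrite -surjective_pairing.
  by rewrite e2 -surjective_pairing.
have eij : ei = ej by rewrite [ei]surjective_pairing e1 e2 -surjective_pairing.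
case/andP: Hj => j0 jm.
have : ei \in C j.-1.
  have ij' : i <= j.-1 by rewrite -ltnS (ltn_predK ij).
  apply: (subsetP (chain_sub HC (leq_trans (leq_pred j) jm) ij')).
  by rewrite Cei setU11.
by rewrite eij (negbTE ejC).
Qed.

Lemma filter_all_nil (occ s : seq nat) :
  all (fun x => x \in occ) s -> [seq x <- s | x \notin occ] = [::].
Proof. by elim: s => //= x s IH /andP[-> /IH]. Qed.

Lemma park n (P : pforest n) m C lam : is_priority_forest P ->
  max_chain P m C -> JH_perm C m lam ->
  forall k, k <= m ->
  park_seq (fun i => odflt 0 (spm P (lam i))) n k = Some (map lam (iota 1 k)).
Proof.
move=> HP HC HJ; elim=> [|k IH] km //=.
rewrite IH ?(ltnW km) //.
have [[p c] [eC Ce lc eP pc]] := chain_step HC HJ (andI (ltn0Sn k) km).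
rewrite /= in lc pc.
rewrite lc (spm_edge HP eP) /=.
set occ := map lam (iota 1 k).
have cn : c <= n by rewrite -ltnS ltn_ord.
have Hocc : forall v, p < v < c -> v \in occ.
  move=> v /andP[pv vc].
  have vn : v < n.+1 by lia.
  have HCk := (proj1 (proj2 (proj2 HC))) k.+1 km.
  have pcC : (p, c) \in C k.+1 by rewrite Ce setU11.
  have h1 : p < (inord v : 'I_n.+1) by rewrite inordK.
  have h2 : (inord v : 'I_n.+1) < c by rewrite inordK.
  have [u uv] := @has_parent n (C k.+1) HCk p c (inord v) pcC h1 h2.
  rewrite Ce in_setU1 in uv; case/orP: uv => [/eqP [_ ec]|uv].
    by exfalso; have := congr1 val ec; rewrite /= inordK //; lia.
  have [j /andP[j0 jk] lj] := L_mem HC HJ (ltnW km) uv.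
  rewrite /= inordK // in lj.
  by apply/mapP; exists j => //; rewrite mem_iota; lia.
have cocc : (nat_of_ord c) \notin occ.
  apply/negP; rewrite /occ => /mapP[j]; rewrite mem_iota => jr cj.
  have jm : 0 < j <= m by lia.
  have := @lam_inj n P m C lam HP HC HJ j k.+1 jm (andI (ltn0Sn k) km).
  by rewrite -cj lc => /(_ erefl); lia.
rewrite /index_iota.
have -> : n.+1 - p.+1 = (c - p.+1) + (n - c).+1 by lia.
rewrite iotaD filter_cat.
have -> : p.+1 + (c - p.+1) = c by lia.
rewrite filter_all_nil; last by apply/allP => v; rewrite mem_iota => h; apply: Hocc; lia.
rewrite /= cocc /=.
have -> : lam 1 :: [seq lam i | i <- iota 2 k] = map lam (iota 1 k.+1) by [].
have -> : iota 1 k.+1 = rcons (iota 1 k) k.+1 by rewrite -cats1 -(iotaD 1 k 1) addn1.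
by rewrite map_rcons lc.
Qed.

Theorem lemma4p2 (n m : nat) (P : pforest n) (C : nat -> pforest n) (lam : nat -> nat) :
  is_priority_forest P -> #|P| = m -> max_chain P m C -> JH_perm C m lam ->
  let pi := fun i => odflt 0 (spm P (lam i)) in
  parking_function m n pi /\ pf_of_parking n m pi = P /\
  (forall s, 0 < s <= n -> forall i,
     birdseye pi m n s = Some i <-> (0 < i <= m /\ lam i = s)).
Proof.
move=> HP _ HC HJ pi.
have Hpark := park HP HC HJ (leqnn m).
set occ := map lam (iota 1 m) in Hpark.
have uocc : uniq occ.
  rewrite map_inj_in_uniq ?iota_uniq // => a b; rewrite !mem_iota => ha hb.
  apply: (lam_inj HP HC HJ); lia.
have Hbe : forall s, 0 < s <= n -> forall i,
    birdseye pi m n s = Some i <-> (0 < i <= m /\ lam i = s).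
  move=> s sn i; rewrite /birdseye /pi Hpark sn /=.
  case: ifP => [socc|snocc]; split.
  - case=> <-.
    have := index_mem s occ; rewrite socc size_map size_iota => hi.
    split; first by lia.
    have := nth_index 0 socc.
    by rewrite /occ (nth_map 0) ?size_iota // nth_iota.
  - case=> im li; congr Some.
    have hi : i.-1 < size occ by rewrite size_map size_iota; lia.
    have -> : s = nth 0 occ i.-1.
      rewrite -li /occ (nth_map 0) ?size_iota ?nth_iota; try lia.
      by congr lam; lia.
    rewrite index_uniq //; lia.
  - by [].
  - case=> im li; exfalso; move: snocc.
    have : lam i \in occ by apply: map_f; rewrite mem_iota; lia.
    by rewrite li => ->.
have [_ [CmP _]] := HC.
split; [split|split] => //.
- move=> i im.
  have [[p c] [_ _ lc eP pc]] := chain_step HC HJ im.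
  rewrite /pi lc /= (spm_edge HP eP) /=.
  have := ltn_ord c; rewrite /= in pc; lia.
- by rewrite /pi Hpark.
- apply/setP => -[a b]; rewrite inE /=.
  case: (boolP ((a, b) \in P)) => abP.
    have abC : (a, b) \in C m by rewrite CmP.
    have [j jm lj] := L_mem HC HJ (leqnn m) abC.
    have ab : a < b by have [Hinc _] := HP; exact: (Hinc _ abP).
    have bpos : 0 < b <= n by have := ltn_ord b; lia.
    have -> : birdseye pi m n b = Some j by apply/Hbe.
    rewrite /pi lj /= (spm_edge HP abP) /=; exact: eqxx.
  case E: (birdseye pi m n b) => [c|] //.
  have bpos : 0 < b <= n.
    by move: E; rewrite /birdseye /pi Hpark; case: ifP => // /andP[h _] _.
  have [cm lc] := (Hbe b bpos c).1 E.
  have [[p' c'] [_ _ lc' eP _]] := chain_step HC HJ cm.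
  rewrite /= in lc'.
  rewrite /pi lc' /= (spm_edge HP eP) /=.
  apply/negP => /eqP [h].
  have pa : p' = a by apply: val_inj.
  have cb : c' = b by apply: val_inj; rewrite /= -lc' lc.
  by move: abP; rewrite -pa -cb eP.
Qed.
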